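(* For every category $\mathcal A$ and every $n\ge1$ there are equivalences of categories $\Psi_1\cong\Sigma_*$, $\Psi_1\wr\mathcal A\cong\Sigma_*\wr\mathcal A$, $\Psi_n\cong\Sigma_*^{\wr n}$ and $\Psi_n\wr\mathcal A\cong\Sigma_*^{\wr n}\wr\mathcal A$.
   Context: A tree is a nonempty, connected, acyclic finite graph whose vertices are partitioned into a root vertex of valence 1, a (possibly empty) set of leaf vertices of valence 1, and interior vertices (all other vertices, of arbitrary valence, possibly 1); each tree is required to have at least one interior vertex. Tree isomorphisms are isomorphisms of vertex and edge sets preserving the root and the leaves. Edges are oriented towards the root; $\mathrm{In}(v)$ is the set of incoming edges at $v$. The height of a vertex is the number of vertices strictly between it and the root (the vertex adjacent to the root has height 0, the root height $-1$). A level $n$ tree is a tree all of whose leaves have height $n$ and all of whose interior vertices have height $<n$. A labeled level tree is a level tree together with bijections $l_v:S_v\to\mathrm{In}(v)$ from finite sets, for every vertex $v$. $\Psi_n$ is the category of labeled level $n$ trees with tree isomorphisms as morphisms. For a category $\mathcal A$, $\Psi_n\wr\mathcal A$ is the category of labeled level $n$ trees whose leaves are decorated by objects of $\mathcal A$, with morphisms tree isomorphisms together with $\mathcal A$-morphisms between leaf decorations compatible with the induced bijection of leaves. $\Sigma_*$ is the category of finite sets and bijections; for $n\ge1$, $\Sigma_*^{\wr n}$ is the category whose objects are chains of functions of finite sets $S_1\leftarrow S_2\leftarrow\cdots\leftarrow S_n$ and whose morphisms are families of bijections $S_k\to S_k'$ commuting with the maps. $\Sigma_*\wr\mathcal A$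 is the category whose objects are families $\{A_s\}_{s\in S}$ of objects of $\mathcal A$ indexed by a finite set $S$, with morphisms a bijection $\sigma:T\to S$ plus morphisms $A_t\to B_{\sigma(t)}$. $\Sigma_*^{\wr n}\wr\mathcal A$ has objects pairs $(F,\{A_s\}_{s\in S_n})$ with $F=(S_1\leftarrow\cdots\leftarrow S_n)\in\Sigma_*^{\wr n}$ and $A_s\in\mathcal A$ indexed by the top set $S_n$, and morphisms a natural isomorphism $\Phi:F\to G$ plus morphisms $A_s\to B_{\Phi_n(s)}$. *)

(* Defs.v *)
From HB Require Import structures.
From mathcomp Require Import all_boot.

Set Implicit Arguments.

Unset Printing Implicit Defensive.

Record Cat := Cat_ {
  ob : Type;
  hom : ob -> ob -> Type;
  idm : forall a, hom a a;
  comp : forall x y z, hom y z -> hom x y -> hom x z }.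

Arguments hom {c} _ _.
Arguments idm {c} a.
Arguments comp {c x y z} _ _.

Definition is_category (C : Cat) : Prop :=
  [/\ (forall (a b : ob C) (f : hom a b), comp (idm b) f = f),
      (forall (a b : ob C) (f : hom a b), comp f (idm a) = f) &
      (forall (a b c d : ob C) (f : hom a b) (g : hom b c) (h : hom c d),
          comp h (comp g f) = comp (comp h g) f)].

Record Functor (C D : Cat) := Functor_ {
  fob : ob C -> ob D;
  fmap : forall a b : ob C, hom a b -> hom (fob a) (fob b) }.

Arguments fmap {C D} f {a b} _.

Definition is_functor (C D : Cat) (F : Functor C D) : Prop :=
  (forall a : ob C, fmap F (idm a) = idm (fob F a)) /\
  (forall (a b c : ob C) (g : hom b c) (f : hom a b),
      fmap F (comp g f) = comp (fmap F g) (fmap F f)).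

Definition is_iso {C : Cat} {a b : ob C} (f : hom a b) : Prop :=
  exists g : hom b a, comp g f = idm a /\ comp f g = idm b.

Definition cat_equiv (C D : Cat) : Prop :=
  exists (F : Functor C D) (G : Functor D C),
    [/\ is_functor F, is_functor G,
        (exists eta : forall a : ob C, hom a (fob G (fob F a)),
            (forall a, is_iso (eta a)) /\
            (forall (a b : ob C) (f : hom a b),
                comp (eta b) f = comp (fmap G (fmap F f)) (eta a))) &
        (exists eps : forall d : ob D, hom (fob F (fob G d)) d,
            (forall d, is_iso (eps d)) /\
            (forall (d d' : ob D) (g : hom d d'),
                comp (eps d') (fmap F (fmap G g)) = comp g (eps d)))].

Record bij (S T : finType) := Bij { bfun :> S -> T; bfun_bij : bijective bfun }.

Lemma bijective_id (S : Type) : bijective (@id S).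
Proof. by exists id. Qed.

Definition bij_idm (S : finType) : bij S S := @Bij S S id (bijective_id S).
Definition bij_comp' (S T U : finType) (g : bij T U) (f : bij S T) : bij S U :=
  @Bij S U (g \o f) (bij_comp (bfun_bij g) (bfun_bij f)).

Definition Sigma_star : Cat := @Cat_ finType bij bij_idm bij_comp'.

Record fam (A : Cat) := Fam { fS : finType; fA : fS -> ob A }.
Record fam_hom (A : Cat) (X Y : fam A) := FamHom {
  fsig : bij (fS X) (fS Y);
  fmor : forall t : fS X, hom (fA X t) (fA Y (fsig t)) }.

Definition fam_id (A : Cat) (X : fam A) : fam_hom X X :=
  @FamHom A X X (bij_idm (fS X)) (fun t => idm (fA X t)).
Definition fam_comp (A : Cat) (X Y Z : fam A) (g : fam_hom Y Z) (f : fam_hom X Y)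
  : fam_hom X Z :=
  @FamHom A X Z (bij_comp' (fsig g) (fsig f))
    (fun t => comp (fmor g (fsig f t)) (fmor f t)).

Definition Sigma_star_wr (A : Cat) : Cat := @Cat_ (fam A) (@fam_hom A) (@fam_id A) (@fam_comp A).

(* Sigma_*^{wr n}: chains S_1 <- S_2 <- ... <- S_n                     *)
(* (S_{k+1} is cS (k : 'I_n), the map S_{k+2} -> S_{k+1} is cp k)      *)

Record chain (n : nat) := Chain {
  cS : 'I_n -> finType;
  cp : forall (k : 'I_n) (H : k.+1 < n), cS (Ordinal H) -> cS k }.
Arguments cp {n} c {k} H _.

Record chain_hom (n : nat) (F G : chain n) := ChainHom {
  cphi : forall k : 'I_n, bij (cS F k) (cS G k);
  ccomm : forall (k : 'I_n) (H : k.+1 < n) (x : cS F (Ordinal H)),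
      cphi k (cp F H x) = cp G H (cphi (Ordinal H) x) }.

Lemma chain_id_comm n (F : chain n) (k : 'I_n) (H : k.+1 < n) (x : cS F (Ordinal H)) :
  bij_idm (cS F k) (cp F H x) = cp F H (bij_idm (cS F (Ordinal H)) x).
Proof. by []. Qed.

Definition chain_id n (F : chain n) : chain_hom F F :=
  @ChainHom n F F (fun k => bij_idm (cS F k)) (@chain_id_comm n F).

Lemma chain_comp_comm n (F G K : chain n) (g : chain_hom G K) (f : chain_hom F G)
  (k : 'I_n) (H : k.+1 < n) (x : cS F (Ordinal H)) :
  bij_comp' (cphi g k) (cphi f k) (cp F H x)
  = cp K H (bij_comp' (cphi g (Ordinal H)) (cphi f (Ordinal H)) x).
Proof. by rewrite /= ccomm ccomm. Qed.

Definition chain_comp n (F G K : chain n) (g : chain_hom G K) (f : chain_hom F G)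
  : chain_hom F K :=
  @ChainHom n F K (fun k => bij_comp' (cphi g k) (cphi f k)) (chain_comp_comm g f).

Definition Sigma_star_iter (n : nat) : Cat :=
  @Cat_ (chain n) (@chain_hom n) (@chain_id n) (@chain_comp n).

(* Sigma_*^{wr n} wr A: a chain with a family of objects of A indexed by the
   top set S_n (= cS k for the unique k with k.+1 = n). *)
Record dchain (A : Cat) (n : nat) := DChain {
  dc : chain n;
  ddec : forall k : 'I_n, k.+1 == n -> cS dc k -> ob A }.

Record dchain_hom (A : Cat) n (X Y : dchain A n) := DChainHom {
  dphi : chain_hom (dc X) (dc Y);
  dmor : forall (k : 'I_n) (H : k.+1 == n) (x : cS (dc X) k),
      hom (ddec X k H x) (ddec Y k H (cphi dphi k x)) }.

Definition dchain_id (A : Cat) n (X : dchain A n) : dchain_hom X X :=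
  @DChainHom A n X X (chain_id (dc X)) (fun k H x => idm (ddec X k H x)).

Definition dchain_comp (A : Cat) n (X Y Z : dchain A n)
  (g : dchain_hom Y Z) (f : dchain_hom X Y) : dchain_hom X Z :=
  @DChainHom A n X Z (chain_comp (dphi g) (dphi f))
    (fun k H x => comp (dmor g k H (cphi (dphi f) k x)) (dmor f k H x)).

Definition Sigma_star_iter_wr (n : nat) (A : Cat) : Cat :=
  @Cat_ (dchain A n) (@dchain_hom A n) (@dchain_id A n) (@dchain_comp A n).

Section Graph.
Context {V E : finType}.
Variables (src tgt : E -> V) (root : V).

Definition adj : rel V := fun u w =>
  [exists e, ((src e == u) && (tgt e == w)) || ((src e == w) && (tgt e == u))].

Definition valence (v : V) : nat :=
  #|[set e | src e == v]| + #|[set e | tgt e == v]|.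

(* A walk from v: a sequence of edges, each traversed forwards (true)
   or backwards (false); walk_end returns its end vertex (None if the
   sequence is not a walk starting at v). *)
Fixpoint walk_end (v : V) (s : seq (E * bool)) : option V :=
  match s with
  | [::] => Some v
  | (e, b) :: s' =>
      if (if b then src e else tgt e) == v
      then walk_end (if b then tgt e else src e) s' else None
  end.

Definition acyclic : Prop :=
  forall (v : V) (s : seq (E * bool)),
    s != [::] -> uniq (map fst s) -> walk_end v s <> Some v.

Definition connected : Prop := forall v w : V, connect adj v w.

Fixpoint ball (k : nat) : {set V} :=
  match k with
  | 0 => [set root]
  | k'.+1 => ball k' :|: [set w | [exists u in ball k', adj u w]]
  end.

Definition at_dist (v : V) (d : nat) : bool :=
  (v \in ball d) && (if d is d'.+1 then v \notin ball d' else true).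

Definition oriented_to_root : Prop :=
  forall e : E, exists d, at_dist (tgt e) d /\ at_dist (src e) d.+1.

End Graph.

Record tree := Tree {
  tV : finType;
  tE : finType;
  tsrc : tE -> tV;
  ttgt : tE -> tV;
  troot : tV;
  tleaf : {set tV};
  troot_notleaf : troot \notin tleaf;
  troot_val : valence tsrc ttgt troot = 1;
  tleaf_val : forall v, v \in tleaf -> valence tsrc ttgt v = 1;
  tinterior_ex : exists v, (v != troot) && (v \notin tleaf);
  tconnected : connected tsrc ttgt;
  tacyclic : acyclic tsrc ttgt;
  toriented : oriented_to_root tsrc ttgt troot }.

Definition interior (T : tree) : {set tV T} :=
  [set v | (v != troot T) && (v \notin tleaf T)].

(* height v = (graph distance from root) - 1; level n tree: leaves have
   height n (distance n+1), interior vertices height < n (distance <= n) *)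
Definition is_level (n : nat) (T : tree) : Prop :=
  (forall v, v \in tleaf T -> at_dist (tsrc T) (ttgt T) (troot T) v n.+1) /\
  (forall v, v \in interior T -> v \in ball (tsrc T) (ttgt T) (troot T) n).

Definition In {T : tree} (v : tV T) : Type := {e : tE T | ttgt T e == v}.

Record ltree (n : nat) := LTree {
  ltr : tree;
  llevel : is_level n ltr;
  lS : tV ltr -> finType;
  llab : forall v, lS v -> In v;
  llab_bij : forall v, bijective (llab v) }.

Record tiso (T T' : tree) := TIso {
  iV : tV T -> tV T';
  iE : tE T -> tE T';
  iV_bij : bijective iV;
  iE_bij : bijective iE;
  i_src : forall e, tsrc T' (iE e) = iV (tsrc T e);
  i_tgt : forall e, ttgt T' (iE e) = iV (ttgt T e);
  i_root : iV (troot T) = troot T';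
  i_leaf : forall v, v \in tleaf T -> iV v \in tleaf T';
  i_leaf_r : forall v, iV v \in tleaf T' -> v \in tleaf T }.

Definition tiso_id (T : tree) : tiso T T :=
  @TIso T T id id (bijective_id _) (bijective_id _)
    (fun e => erefl) (fun e => erefl) erefl (fun v H => H) (fun v H => H).

Section TisoComp.
Variables (T1 T2 T3 : tree) (g : tiso T2 T3) (f : tiso T1 T2).
Lemma tc_src e : tsrc T3 (iE g (iE f e)) = iV g (iV f (tsrc T1 e)).
Proof. by rewrite i_src i_src. Qed.
Lemma tc_tgt e : ttgt T3 (iE g (iE f e)) = iV g (iV f (ttgt T1 e)).
Proof. by rewrite i_tgt i_tgt. Qed.
Lemma tc_root : iV g (iV f (troot T1)) = troot T3.
Proof. by rewrite i_root i_root. Qed.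
Lemma tc_leaf_r v : iV g (iV f v) \in tleaf T3 -> v \in tleaf T1.
Proof. by move=> H; apply: i_leaf_r; apply: i_leaf_r H. Qed.
Definition tiso_comp : tiso T1 T3 :=
  @TIso T1 T3 (fun v => iV g (iV f v)) (fun e => iE g (iE f e))
    (bij_comp (iV_bij g) (iV_bij f)) (bij_comp (iE_bij g) (iE_bij f))
    tc_src tc_tgt tc_root (fun v H => i_leaf g (i_leaf f H)) tc_leaf_r.
End TisoComp.

Definition Psi (n : nat) : Cat :=
  @Cat_ (ltree n) (fun X Y => tiso (ltr X) (ltr Y))
    (fun X => tiso_id (ltr X)) (fun X Y Z g f => tiso_comp g f).

Record dtree (A : Cat) (n : nat) := DTree {
  dt : ltree n;
  tdec : forall v : tV (ltr dt), v \in tleaf (ltr dt) -> ob A }.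

Record dtree_hom (A : Cat) n (X Y : dtree A n) := DTreeHom {
  tmor_iso : tiso (ltr (dt X)) (ltr (dt Y));
  tmor : forall v (H : v \in tleaf (ltr (dt X))),
      hom (tdec X H) (tdec Y (i_leaf tmor_iso H)) }.

Definition dtree_id (A : Cat) n (X : dtree A n) : dtree_hom X X :=
  @DTreeHom A n X X (tiso_id _) (fun v H => idm (tdec X H)).

Definition dtree_comp (A : Cat) n (X Y Z : dtree A n)
  (g : dtree_hom Y Z) (f : dtree_hom X Y) : dtree_hom X Z :=
  @DTreeHom A n X Z (tiso_comp (tmor_iso g) (tmor_iso f))
    (fun v H => comp (tmor g (i_leaf (tmor_iso f) H)) (tmor f H)).

Definition Psi_wr (n : nat) (A : Cat) : Cat :=
  @Cat_ (dtree A n) (@dtree_hom A n) (@dtree_id A n) (@dtree_comp A n).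

(* Main.v *)
Require Import Defs.
From mathcomp Require Import all_boot.
Require Import Defs.
From Stdlib Require Import ClassicalEpsilon ProofIrrelevance FunctionalExtensionality Eqdep_dec Eqdep.
Set Implicit Arguments. Unset Strict Implicit. Unset Printing Implicit Defensive.


Definition ffaith (C D : Cat) (F : Functor C D) : Prop :=
  forall a b : ob C, exists g : hom (fob F a) (fob F b) -> hom a b,
    cancel (@fmap _ _ F a b) g /\ cancel g (@fmap _ _ F a b).

Definition esurj (C D : Cat) (F : Functor C D) : Prop :=
  forall d : ob D, exists c : ob C, exists (phi : hom (fob F c) d) (psi : hom d (fob F c)),
    comp psi phi = idm _ /\ comp phi psi = idm _.

Section Equiv.
Variables (C D : Cat) (F : Functor D C).
Hypotheses (catC : is_category C) (catD : is_category D) (funF : is_functor F)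
  (ffF : ffaith F) (esF : esurj F).

Lemma equiv_of_ffes : cat_equiv C D.
Proof.
case: catC => idlC idrC asC.
case: funF => Fid Fcomp.
pose Finv a b := proj1_sig (constructive_indefinite_description _ (ffF a b)).
have FinvK a b : cancel (@fmap _ _ F a b) (@Finv a b).
  by rewrite /Finv; case: constructive_indefinite_description => g [].
have FKinv a b : cancel (@Finv a b) (@fmap _ _ F a b).
  by rewrite /Finv; case: constructive_indefinite_description => g [].
pose Gob c := proj1_sig (constructive_indefinite_description _ (esF c)).
have GP c : exists (phi : hom (fob F (Gob c)) c) (psi : hom c (fob F (Gob c))),
    comp psi phi = idm _ /\ comp phi psi = idm _.
  by rewrite /Gob; case: constructive_indefinite_description.
pose phi c := proj1_sig (constructive_indefinite_description _ (GP c)).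
have GP2 c : exists psi : hom c (fob F (Gob c)), comp psi (phi c) = idm _ /\ comp (phi c) psi = idm _.
  by rewrite /phi; case: constructive_indefinite_description.
pose psi c := proj1_sig (constructive_indefinite_description _ (GP2 c)).
have psiphi c : comp (psi c) (phi c) = idm _.
  by rewrite /psi; case: constructive_indefinite_description => ? [].
have phipsi c : comp (phi c) (psi c) = idm _.
  by rewrite /psi; case: constructive_indefinite_description => ? [].
have Finv_comp a b c (g : hom (fob F b) (fob F c)) (f : hom (fob F a) (fob F b)) :
    Finv _ _ (comp g f) = comp (Finv _ _ g) (Finv _ _ f).
  by rewrite -[in LHS](FKinv _ _ g) -[in LHS](FKinv _ _ f) -Fcomp FinvK.
have Finv_id a : Finv _ _ (idm (fob F a)) = idm a by rewrite -Fid FinvK.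
pose G := @Functor_ C D Gob (fun a b h => Finv _ _ (comp (psi b) (comp h (phi a)))).
exists G, F; split => //.
- split => [a|a b c g f] /=; first by rewrite idlC psiphi Finv_id.
  rewrite -Finv_comp; congr (Finv _ _ _).
  by rewrite -!asC (asC _ _ _ _ _ (psi b) (phi b)) phipsi idlC.
- exists psi; split => [c|a b f] /=.
    by exists (phi c); split.
  by rewrite FKinv -!asC phipsi idrC.
- exists (fun d => Finv _ _ (phi (fob F d))); split => [d|d d' g] /=.
    exists (Finv _ _ (psi (fob F d))); rewrite -!Finv_comp psiphi phipsi.
    by rewrite !Finv_id.
  rewrite -Finv_comp -{2}(FinvK _ _ g) -Finv_comp; congr (Finv _ _ _).
  by rewrite asC phipsi idlC.
Qed.
End Equiv.

Section Raw.
Context {V E : finType}.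
Variables (src tgt : E -> V) (root : V).
Local Notation ball := (ball src tgt root).
Local Notation adj := (adj src tgt).

Lemma ballS k v : (v \in ball k.+1) = (v \in ball k) || [exists u in ball k, adj u v].
Proof. by rewrite /= !inE. Qed.

Lemma ball0 v : (v \in ball 0) = (v == root).
Proof. by rewrite /= inE. Qed.

Lemma ball_le k m v : k <= m -> v \in ball k -> v \in ball m.
Proof.
move=> /subnKC <-; elim: (m - k) => [|j IH]; first by rewrite addn0.
by move=> H; rewrite addnS ballS IH.
Qed.

Lemma adjC u w : adj u w = adj w u.
Proof.
by apply/existsP/existsP => -[e He]; exists e; rewrite orbC.
Qed.

Lemma adjP u w : reflect (exists e, (src e == u) && (tgt e == w) || (src e == w) && (tgt e == u))
  (adj u w).
Proof. exact: existsP. Qed.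

Lemma ball_depth (d : V -> nat) :
  (forall v, (d v == 0) = (v == root)) ->
  (forall u w, adj u w -> d w <= (d u).+1) ->
  (forall w k, d w = k.+1 -> exists u, d u = k /\ adj u w) ->
  forall k v, (v \in ball k) = (d v <= k).
Proof.
move=> H0 H1 H2; elim=> [|k IH] v; first by rewrite ball0 leqn0 H0.
rewrite ballS IH; apply/idP/idP.
  case/orP=> [/leqW //|/existsP [u /andP [Hu Ha]]].
  by apply: leq_trans (H1 _ _ Ha) _; rewrite IH in Hu.
rewrite leq_eqVlt ltnS; case/orP=> [/eqP Hv|->]; last by [].
have [u [Hu Ha]] := H2 _ _ Hv.
by apply/orP; right; apply/existsP; exists u; rewrite IH Hu leqnn.
Qed.

Lemma at_dist_depth (d : V -> nat) :
  (forall v, (d v == 0) = (v == root)) ->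
  (forall u w, adj u w -> d w <= (d u).+1) ->
  (forall w k, d w = k.+1 -> exists u, d u = k /\ adj u w) ->
  forall k v, at_dist src tgt root v k = (d v == k).
Proof.
move=> H0 H1 H2 k v; rewrite /at_dist (ball_depth H0 H1 H2).
case: k => [|k]; first by rewrite leqn0 andbT.
by rewrite (ball_depth H0 H1 H2) -ltnNge eqn_leq andbC.
Qed.

Lemma walk_end_cat v s t :
  walk_end src tgt v (s ++ t) =
  if walk_end src tgt v s is Some w then walk_end src tgt w t else None.
Proof.
elim: s v => [|[e b] s IH] v //=.
by case: ifP.
Qed.


Lemma path_ball k x p : x \in ball k -> path adj x p -> last x p \in ball (k + size p).
Proof.
elim: p k x => [|y p IH] k x /=; first by rewrite addn0.
move=> Hx /andP [Hxy Hp]; rewrite addnS -addSn; apply: IH Hp.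
by rewrite ballS; apply/orP; right; apply/existsP; exists x; rewrite Hx.
Qed.

End Raw.

Section Tr.
Variable T : tree.
Local Notation V := (tV T).
Local Notation E := (tE T).
Local Notation src := (tsrc T).
Local Notation tgt := (ttgt T).
Local Notation root := (troot T).
Local Notation ball := (ball src tgt root).
Local Notation adj := (adj src tgt).

Lemma ball_ex v : exists k, v \in ball k.
Proof.
have /connectP [p Hp Hl] := tconnected T root v.
exists (0 + size p); rewrite Hl; apply: path_ball Hp.
by rewrite ball0.
Qed.

Definition dist (v : V) : nat := ex_minn (ball_ex v).

Lemma dist_ball k v : (v \in ball k) = (dist v <= k).
Proof.
rewrite /dist; case: ex_minnP => m Hm Hmin; apply/idP/idP; first exact: Hmin.
by move=> H; apply: ball_le H Hm.
Qed.

Lemma at_distE v d : at_dist src tgt root v d = (dist v == d).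
Proof.
rewrite /at_dist dist_ball; case: d => [|d]; first by rewrite leqn0 andbT.
by rewrite dist_ball -ltnNge eqn_leq andbC.
Qed.

Lemma dist_edge e : dist (src e) = (dist (tgt e)).+1.
Proof.
have [d [H1 H2]] := toriented T e.
rewrite at_distE in H1; rewrite at_distE in H2.
by rewrite (eqP H1) (eqP H2).
Qed.

Lemma dist0 v : (dist v == 0) = (v == root).
Proof. by rewrite -leqn0 -dist_ball ball0. Qed.

Lemma dist_root : dist root = 0.
Proof. by apply/eqP; rewrite dist0. Qed.

Lemma out_ex v : v != root -> exists e, src e == v.
Proof.
rewrite -dist0; case Hd: (dist v) => [|d] // _.
have : v \in ball d.+1 by rewrite dist_ball Hd.
rewrite ballS dist_ball Hd ltnn /= => /existsP [u /andP [Hu /adjP [e He]]].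
rewrite dist_ball in Hu.
case/orP: He => /andP [/eqP Hs /eqP Ht]; last by exists e; rewrite Hs.
have := dist_edge e; rewrite Hs Ht Hd => Hu'.
by rewrite Hu' ltnNge leqW in Hu.
Qed.

Lemma edge_ex : exists e : E, true.
Proof.
have [v /andP [Hv _]] := tinterior_ex T.
by have [e _] := out_ex Hv; exists e.
Qed.

Definition edef : E := xchoose edge_ex.
Definition out (v : V) : E := odflt edef [pick e | src e == v].
Definition par (v : V) : V := tgt (out v).

Lemma src_out v : v != root -> src (out v) = v.
Proof.
move=> Hv; rewrite /out; case: pickP => [e /eqP //|H].
by have [e He] := out_ex Hv; rewrite H in He.
Qed.

Lemma dist_par v : v != root -> dist v = (dist (par v)).+1.
Proof. by move=> Hv; rewrite /par -dist_edge src_out. Qed.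

Lemma src_root e : src e != root.
Proof. by rewrite -dist0 dist_edge. Qed.


Lemma trail_ex d a b : dist a = d -> dist b = d -> a != b ->
  exists t, [/\ walk_end src tgt a t = Some b, uniq (map fst t) &
             all (fun p => dist (src p.1) <= d) t].
Proof.
elim: d a b => [|d IH] a b Ha Hb Hab.
  by move: Hab; move/eqP: Ha; move/eqP: Hb; rewrite !dist0 => /eqP -> /eqP ->; rewrite eqxx.
have Ha0 : a != root by rewrite -dist0 Ha.
have Hb0 : b != root by rewrite -dist0 Hb.
have Hoab : out a != out b.
  by apply: contra Hab => /eqP H; rewrite -(src_out Ha0) H src_out.
have Hpa : dist (par a) = d by move: Ha; rewrite dist_par // => -[].
have Hpb : dist (par b) = d by move: Hb; rewrite dist_par // => -[].
case: (eqVneq (par a) (par b)) => Hp.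
  exists [:: (out a, true); (out b, false)]; split => /=.
  - by rewrite src_out // eqxx; rewrite /par in Hp; rewrite -Hp eqxx src_out.
  - by rewrite inE Hoab.
  - by rewrite !src_out // Ha Hb leqnn.
have [t [Ht1 Ht2 Ht3]] := IH _ _ Hpa Hpb Hp.
exists ((out a, true) :: t ++ [:: (out b, false)]); split => /=.
- rewrite src_out // eqxx walk_end_cat.
  by rewrite /par in Ht1; rewrite Ht1 /= eqxx src_out.
  - rewrite map_cat /= cat_uniq Ht2 /= mem_cat inE negb_or Hoab orbF !andbT /=.
  have Hn x : x \in map fst t -> dist (src x) <= d.
    by case/mapP => -[e bb] /(allP Ht3) /= H ->.
  apply/andP; split; last first.
    by apply/negP => /Hn; rewrite src_out // ?Ha ?Hb ltnn.
  by apply/negP => /Hn; rewrite src_out // ?Ha ?Hb ltnn.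
- rewrite all_cat /= !src_out // Ha Hb leqnn /= andbT.
  by apply: sub_all Ht3 => -[e bb] /= /leqW.
Qed.

Lemma out_uniq e1 e2 : src e1 = src e2 -> e1 = e2.
Proof.
move=> Hs; case: (eqVneq e1 e2) => // Hne; exfalso.
have Hd : dist (tgt e1) = dist (tgt e2).
  by apply/eqP; rewrite -eqSS -!dist_edge Hs.
case: (eqVneq (tgt e1) (tgt e2)) => Ht.
  have := tacyclic T; rewrite /acyclic => /(_ (src e1) ([:: (e1, true); (e2, false)])); apply => //=.
    by rewrite inE Hne.
  by rewrite !eqxx Ht eqxx Hs.
have [t [Ht1 Ht2 Ht3]] := trail_ex (erefl _) (esym Hd) Ht.
have := tacyclic T; rewrite /acyclic => /(_ (src e1) ((e1, true) :: t ++ [:: (e2, false)])); apply => //=.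
  rewrite map_cat /= cat_uniq Ht2 /= mem_cat inE negb_or Hne orbF !andbT /=.
  have Hn x : x \in map fst t -> dist (src x) <= dist (tgt e1).
    by case/mapP => -[e bb] /(allP Ht3) /= H ->.
  by apply/andP; split; apply/negP => /Hn; rewrite dist_edge ?Hd ltnn.
by rewrite eqxx walk_end_cat Ht1 /= eqxx Hs.
Qed.

Lemma out_src e : out (src e) = e.
Proof. by apply: out_uniq; rewrite src_out // src_root. Qed.

Lemma par_tgt e : par (src e) = tgt e.
Proof. by rewrite /par out_src. Qed.


Lemma src_root_card : #|[set e | src e == root]| = 0.
Proof. by apply/eqP; rewrite cards_eq0; apply/eqP/setP => e; rewrite !inE (negbTE (src_root e)). Qed.

Lemma tgt_root_ex : exists e0, [set e | tgt e == root] = [set e0].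
Proof.
have := troot_val T; rewrite /valence src_root_card add0n => /eqP.
by move/cards1P.
Qed.

Definition re : E := odflt edef [pick e | tgt e == root].

Lemma re_uniq e : (tgt e == root) = (e == re).
Proof.
have [e0 He0] := tgt_root_ex.
have H x : (tgt x == root) = (x == e0) by move/setP: He0 => /(_ x); rewrite !inE.
rewrite /re; case: pickP => [x Hx|Hn]; first by rewrite H; move: Hx; rewrite H => /eqP ->.
by have := Hn e0; rewrite H eqxx.
Qed.

Lemma tgt_re : tgt re = root.
Proof. by apply/eqP; rewrite re_uniq. Qed.

Definition w0 : V := src re.

Lemma dist1 v : (dist v == 1) = (v == w0).
Proof.
apply/idP/idP => [Hv|/eqP ->]; last by rewrite /w0 dist_edge tgt_re dist_root.
have Hv0 : v != root by rewrite -dist0 (eqP Hv).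
move: Hv; rewrite dist_par // eqSS dist0 /par re_uniq /w0 => /eqP <-.
by rewrite src_out.
Qed.

Lemma w0_root : w0 != root.
Proof. exact: src_root. Qed.

Section Level.
Variables (n : nat) (Hl : is_level n T).

Lemma leaf_dist v : (v \in tleaf T) = (dist v == n.+1).
Proof.
case: Hl => H1 H2; apply/idP/idP => [/H1|Hv]; first by rewrite at_distE.
case: (boolP (v \in tleaf T)) => // Hnl.
have Hr : v != root by rewrite -dist0 (eqP Hv).
have := H2 v; rewrite inE Hr Hnl dist_ball (eqP Hv) ltnn => H; by have := H isT.
Qed.

Lemma dist_le v : dist v <= n.+1.
Proof.
case: Hl => H1 H2; case: (boolP (v \in tleaf T)) => [|Hnl]; first by rewrite leaf_dist => /eqP ->.
case: (eqVneq v root) => [->|Hr]; first by rewrite dist_root.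
by apply: leqW; rewrite -dist_ball; apply: H2; rewrite inE Hr.
Qed.
End Level.

End Tr.

Section TIsoDist.
Variables (T T' : tree) (f : tiso T T').

Lemma iV_surj v' : exists v, iV f v = v'.
Proof. by case: (iV_bij f) => g _ H; exists (g v'). Qed.
Lemma iE_surj e' : exists e, iE f e = e'.
Proof. by case: (iE_bij f) => g _ H; exists (g e'). Qed.
Lemma iV_inj : injective (iV f).
Proof. exact: bij_inj (iV_bij f). Qed.
Lemma iE_inj : injective (iE f).
Proof. exact: bij_inj (iE_bij f). Qed.

Lemma adj_iso u w : adj (tsrc T') (ttgt T') (iV f u) (iV f w) = adj (tsrc T) (ttgt T) u w.
Proof.
apply/adjP/adjP => -[e He].
  have [e0 He0] := iE_surj e; exists e0; move: He.
  by rewrite -He0 i_src i_tgt !(inj_eq iV_inj).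
by exists (iE f e); rewrite i_src i_tgt !(inj_eq iV_inj).
Qed.

Lemma ball_iso k v : (iV f v \in ball (tsrc T') (ttgt T') (troot T') k) =
                     (v \in ball (tsrc T) (ttgt T) (troot T) k).
Proof.
elim: k v => [|k IH] v; first by rewrite !ball0 -(i_root f) (inj_eq iV_inj).
rewrite !ballS IH; congr (_ || _); apply/existsP/existsP => -[u Hu].
  have [u0 Hu0] := iV_surj u; exists u0; move: Hu.
  by rewrite -Hu0 IH adj_iso.
by exists (iV f u); rewrite IH adj_iso.
Qed.

Lemma dist_iso v : dist (iV f v) = dist v.
Proof.
have H1 : dist (iV f v) <= dist v by rewrite -dist_ball ball_iso dist_ball.
have H2 : dist v <= dist (iV f v) by rewrite -dist_ball -ball_iso dist_ball.
by apply/eqP; rewrite eqn_leq H1 H2.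
Qed.
End TIsoDist.


Section Mk.
Variables (n : nat) (c : chain n).

Definition I := {k : 'I_n & cS c k}.
Definition MV := option (option I).
Definition ME := option I.

Definition parent (u : I) : option I :=
  let: existT k x := u in
  (match k as k0 return cS c k0 -> option I with
   | Ordinal 0 _ => fun _ => None
   | Ordinal m.+1 Hk => fun x =>
       Some (existT _ (Ordinal (ltnW Hk)) (@cp n c (Ordinal (ltnW Hk)) Hk x))
   end) x.

Definition msrc (e : ME) : MV := if e is Some u then Some (Some u) else Some None.
Definition mtgt (e : ME) : MV := if e is Some u then Some (parent u) else None.
Definition mroot : MV := None.
Definition isleaf (v : MV) : bool := if v is Some (Some u) then (tag u).+1 == n else false.
Definition mleaf : {set MV} := [set v | isleaf v].
Definition depth (v : MV) : nat :=
  match v with None => 0 | Some None => 1 | Some (Some u) => (tag u).+2 end.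
Definition mpar (v : MV) : MV :=
  match v with Some (Some u) => Some (parent u) | _ => None end.

Lemma depth_parent u : depth (Some (parent u)) = (tag u).+1.
Proof. by case: u => -[[|m] Hk] x. Qed.

Lemma depth_edge e : depth (msrc e) = (depth (mtgt e)).+1.
Proof. by case: e => [u|] //; rewrite [mtgt _]/= depth_parent. Qed.

Lemma mtgt_par e : mtgt e = mpar (msrc e).
Proof. by case: e. Qed.

Lemma msrc_inj : injective msrc.
Proof. by case=> [u|] [u'|] //= [->]. Qed.

Local Notation madj := (adj msrc mtgt).

Lemma madj_edge e : madj (msrc e) (mtgt e).
Proof. by apply/adjP; exists e; rewrite !eqxx. Qed.

Lemma depth_adj u w : madj u w -> depth w <= (depth u).+1.
Proof.
case/adjP => e /orP [] /andP [/eqP <- /eqP <-]; rewrite depth_edge //.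
by apply: leqW; apply: leqW.
Qed.

Lemma depth0 v : (depth v == 0) = (v == mroot).
Proof. by case: v => [[u|]|]. Qed.

Lemma depth_down w k : depth w = k.+1 -> exists u, depth u = k /\ madj u w.
Proof.
case: w => [[u|]|] //= Hw.
  exists (Some (parent u)); split; first by rewrite depth_parent; case: Hw.
  by rewrite adjC; apply: (madj_edge (Some u)).
by exists None; split; [case: Hw | rewrite adjC; apply: (madj_edge None)].
Qed.

Lemma mball k v : (v \in ball msrc mtgt mroot k) = (depth v <= k).
Proof. exact: ball_depth depth0 depth_adj depth_down k v. Qed.

Lemma mat_dist k v : at_dist msrc mtgt mroot v k = (depth v == k).
Proof. exact: at_dist_depth depth0 depth_adj depth_down k v. Qed.

Lemma moriented : oriented_to_root msrc mtgt mroot.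
Proof.
move=> e; exists (depth (mtgt e)); rewrite !mat_dist depth_edge.
by split.
Qed.

Lemma down_walk s : forall y w, walk_end msrc mtgt y s = Some w -> uniq (map fst s) ->
  (forall e, e \in map fst s -> msrc e != y) ->
  depth w = depth y + size s /\ iter (size s) mpar w = y.
Proof.
elim: s => [|[e b] s IH] y w /=; first by case=> ->; rewrite addn0.
move=> Hw0 /andP [Hes Hu] Hy.
have Hey := Hy e; rewrite inE eqxx /= in Hey.
move: Hw0; case: b => /=; first by rewrite (negbTE (Hey isT)).
case: ifP => // /eqP Hty Hw.
have Hy' : forall e', e' \in map fst s -> msrc e' != msrc e.
  move=> e' He'; apply/negP => /eqP /msrc_inj Heq.
  by rewrite -Heq He' in Hes.
have [H1 H2] := IH _ _ Hw Hu Hy'.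
split; first by rewrite H1 depth_edge Hty addnS.
by rewrite H2 -mtgt_par.
Qed.

Lemma up_down s : forall y w, walk_end msrc mtgt y s = Some w -> uniq (map fst s) ->
  exists a b z, [/\ a + b = size s, iter a mpar y = z, depth z + a = depth y,
     depth w = depth z + b &
     iter b mpar w = z /\
     ((0 < a -> 0 < b -> iter b.-1 mpar w != iter a.-1 mpar y) /\
         (a = 0 -> 0 < b -> exists2 e, e \in map fst s & msrc e = iter b.-1 mpar w))].
Proof.
elim: s => [|[e bb] s IH] y w /=.
  by case=> <- _; exists 0, 0, y; split; rewrite ?addn0.
move=> Hw0 /andP [Hes Hu]; move: Hw0; case: bb => /=; case: ifP => // /eqP Hsy Hw.
- have [a [b [z [Hab Hz Hdz Hdw [Hbz [Hc1 Hc2]]]]]] := IH _ _ Hw Hu.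
  exists a.+1, b, z; split.
  + by rewrite addSn Hab.
  + by rewrite iterSr -Hsy -mtgt_par.
  + by rewrite addnS Hdz -Hsy depth_edge.
  + by [].
  split; first by [].
  split => [_ Hb|//].
  case: a Hab Hz Hdz Hc1 Hc2 => [|a] Hab Hz Hdz Hc1 Hc2 /=.
    have [e'' He'' Hs''] := Hc2 erefl Hb.
    rewrite -Hs'' -Hsy; apply/negP => /eqP /msrc_inj Heq.
    by rewrite -Heq He'' in Hes.
  by rewrite -iterS iterSr -Hsy -mtgt_par; apply: Hc1.
- have Hy' : forall e', e' \in map fst s -> msrc e' != msrc e.
    move=> e' He'; apply/negP => /eqP /msrc_inj Heq.
    by rewrite -Heq He' in Hes.
  have [H1 H2] := down_walk Hw Hu Hy'.
  exists 0, (size s).+1, y; split => //=.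
  + by rewrite addn0.
  + by rewrite H1 depth_edge Hsy addnS.
  split; first by rewrite H2 -mtgt_par.
  split => // _ _; exists e; first by rewrite inE eqxx.
  by rewrite H2.
Qed.

Lemma macyclic : acyclic msrc mtgt.
Proof.
move=> v s Hs Hu Hw.
have [a [b [z [Hab Hz Hdz Hdw [Hbz [Hc1 Hc2]]]]]] := up_down Hw Hu.
have Hba : b = a by apply/eqP; rewrite -(eqn_add2l (depth z)) -Hdw Hdz.
subst b; case: a Hab Hz Hdz Hdw Hbz Hc1 Hc2 => [|a] Hab Hz Hdz Hdw Hbz Hc1 Hc2.
  by move: Hs; rewrite -size_eq0 -Hab eqxx.
by have := Hc1 isT isT; rewrite eqxx.
Qed.


Lemma mroot_notleaf : mroot \notin mleaf.
Proof. by rewrite inE. Qed.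

Lemma mroot_val : valence msrc mtgt mroot = 1.
Proof.
rewrite /valence.
have -> : [set e | msrc e == mroot] = set0 by apply/setP => -[u|]; rewrite !inE.
have -> : [set e | mtgt e == mroot] = [set None] by apply/setP => -[u|]; rewrite !inE.
by rewrite cards0 cards1.
Qed.

Lemma parent_tag u u' : parent u' = Some u -> tag u' = (tag u).+1 :> nat.
Proof.
move=> H; have := depth_parent u'; rewrite H /= => -[] ->.
by [].
Qed.

Lemma mleaf_val v : v \in mleaf -> valence msrc mtgt v = 1.
Proof.
case: v => [[u|]|]; rewrite inE //= => Hu; rewrite /valence.
have -> : [set e | msrc e == Some (Some u)] = [set Some u].
  by apply/setP => -[u'|]; rewrite !inE.
have -> : [set e | mtgt e == Some (Some u)] = set0.
  apply/setP => -[u'|]; rewrite !inE //=; apply/negP => /eqP [] /parent_tag Ht.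
  by have := ltn_ord (tag u'); rewrite Ht (eqP Hu) ltnn.
by rewrite cards0 cards1.
Qed.

Lemma minterior_ex : exists v, (v != mroot) && (v \notin mleaf).
Proof. by exists (Some None); rewrite inE. Qed.

Lemma mconnected : connected msrc mtgt.
Proof.
have Hs : connect_sym (adj msrc mtgt) by apply: sym_connect_sym => x y; apply: adjC.
have Hr : forall k v, depth v = k -> connect (adj msrc mtgt) v mroot.
  elim=> [|k IH] v Hv; first by move/eqP: Hv; rewrite depth0 => /eqP ->.
  have [u [Hu Ha]] := depth_down Hv.
  by apply: connect_trans (IH _ Hu); apply: connect1; rewrite adjC.
move=> v w; apply: connect_trans (Hr _ v erefl) _.
by rewrite Hs; apply: (Hr _ w erefl).
Qed.

Definition mtree : tree :=
  @Tree MV ME msrc mtgt mroot mleaf mroot_notleaf mroot_val mleaf_val minterior_ex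
    mconnected macyclic moriented.

Lemma mlevel : 0 < n -> is_level n mtree.
Proof.
move=> Hn; split => v.
  by rewrite mat_dist; case: v => [[u|]|]; rewrite inE //= => /eqP ->.
rewrite inE mball => /andP []; case: v => [[u|]|] //= _; rewrite inE /=.
by move=> Hu; rewrite ltn_neqAle Hu /=; exact: ltn_ord.
Qed.

End Mk.

Lemma tiso_ext T T' (f g : tiso T T') : iV f =1 iV g -> iE f =1 iE g -> f = g.
Proof.
case: f => v1 e1 a1 b1 c1 d1 r1 l1 m1; case: g => v2 e2 a2 b2 c2 d2 r2 l2 m2 /= H1 H2.
have E1 := functional_extensionality _ _ H1; have E2 := functional_extensionality _ _ H2.
subst v2 e2; f_equal; apply: proof_irrelevance.
Qed.

Lemma tiso_iso T T' (f : tiso T T') :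
  exists g : tiso T' T, tiso_comp g f = tiso_id T /\ tiso_comp f g = tiso_id T'.
Proof.
case: (iV_bij f) => gv gv1 gv2; case: (iE_bij f) => ge ge1 ge2.
have Hs e : tsrc T (ge e) = gv (tsrc T' e).
  by apply: (@iV_inj _ _ f); rewrite -i_src !gv2 ge2.
have Ht e : ttgt T (ge e) = gv (ttgt T' e).
  by apply: (@iV_inj _ _ f); rewrite -i_tgt !gv2 ge2.
have Hr : gv (troot T') = troot T by rewrite -(i_root f) gv1.
have Hl v : v \in tleaf T' -> gv v \in tleaf T.
  by move=> H; apply: (@i_leaf_r _ _ f); rewrite gv2.
have Hl' v : gv v \in tleaf T -> v \in tleaf T'.
  by move=> /(i_leaf f); rewrite gv2.
exists (@TIso T' T gv ge (Bijective gv2 gv1) (Bijective ge2 ge1) Hs Ht Hr Hl Hl').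
by split; apply: tiso_ext => x /=.
Qed.

Lemma Psi_cat n : is_category (Psi n).
Proof. by split => *; apply: tiso_ext. Qed.

Lemma exT_inj (I : eqType) (P : I -> Type) (k : I) (x y : P k) :
  existT P k x = existT P k y -> x = y.
Proof.
move=> H; apply: (Eqdep_dec.inj_pair2_eq_dec I) H.
by move=> a b; case: (a =P b); [left|right].
Qed.

Lemma inj_surj_bij (A B : finType) (f : A -> B) :
  injective f -> (forall b, exists a, f a = b) -> bijective f.
Proof.
move=> Hi Hs.
have Hs' b : exists a, f a == b by have [a Ha] := Hs b; exists a; rewrite Ha.
exists (fun b => xchoose (Hs' b)) => [a|b].
  by apply: Hi; apply/eqP; apply: (xchooseP (Hs' (f a))).
by apply/eqP; exact: (xchooseP (Hs' b)).
Qed.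

Lemma ff_of_injsurj (C D : Cat) (F : Functor C D) :
  (forall a b, injective (@fmap _ _ F a b)) ->
  (forall a b (g : hom (fob F a) (fob F b)), exists f, fmap F f = g) -> ffaith F.
Proof.
move=> Hi Hs a b.
exists (fun g => proj1_sig (constructive_indefinite_description _ (Hs a b g))).
split=> [f|g]; case: constructive_indefinite_description => //= f' Hf'.
exact: Hi.
Qed.

Definition lab (T : tree) (v : tV T) : finType := {e : tE T | ttgt T e == v}.
Definition mkl n (T : tree) (H : is_level n T) : ltree n :=
  @LTree n T H (@lab T) (fun v x => x) (fun v => bijective_id _).

Section F3.
Variables (n : nat) (Hn : 0 < n).

Lemma parent_S (c : chain n) (k : 'I_n) (H : k.+1 < n) (x : cS c (Ordinal H)) :
  parent (existT _ (Ordinal H) x) = Some (existT _ k (cp c H x)).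
Proof.
case: k H x => m Hm H x /=.
by rewrite (bool_irrelevance (ltnW H) Hm).
Qed.

Lemma parent_0 (c : chain n) (k : 'I_n) (x : cS c k) :
  val k = 0 -> parent (existT _ k x) = None.
Proof. by case: k x => -[|m] Hm x. Qed.

Definition mapI (c c' : chain n) (h : chain_hom c c') (u : I c) : I c' :=
  existT _ (tag u) (cphi h (tag u) (tagged u)).

Lemma mapI_parent c c' (h : chain_hom c c') u :
  parent (mapI h u) = omap (mapI h) (parent u).
Proof.
case: u => -[[|m] Hm] x //=.
by rewrite /mapI /= (ccomm h (Ordinal (ltnW Hm)) Hm).
Qed.

Lemma mapI_inj c c' (h : chain_hom c c') : injective (mapI h).
Proof.
case=> k x [k' x'] H.
have Hk : k = k' := f_equal (@projT1 _ _) H.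
subst k'; have H' := exT_inj H.
by move: H' => /= /(bij_inj (bfun_bij _)) ->.
Qed.

Lemma mapI_surj c c' (h : chain_hom c c') u' : exists u, mapI h u = u'.
Proof.
case: u' => k y; case: (bfun_bij (cphi h k)) => g _ Hg.
by exists (existT _ k (g y)); rewrite /mapI /= Hg.
Qed.

Section Hom.
Variables (c c' : chain n) (h : chain_hom c c').
Definition hV (v : MV c) : MV c' := omap (omap (mapI h)) v.
Definition hE (e : ME c) : ME c' := omap (mapI h) e.

Lemma hV_bij : bijective hV.
Proof.
apply: inj_surj_bij.
  by case=> [[u|]|] [[u'|]|] //= /Some_inj/Some_inj/mapI_inj ->.
case=> [[u'|]|]; last by exists None.
  by have [u Hu] := mapI_surj h u'; exists (Some (Some u)); rewrite /= Hu.
by exists (Some None).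
Qed.

Lemma hE_bij : bijective hE.
Proof.
apply: inj_surj_bij.
  by case=> [u|] [u'|] //= /Some_inj/mapI_inj ->.
case=> [u'|]; last by exists None.
by have [u Hu] := mapI_surj h u'; exists (Some u); rewrite /= Hu.
Qed.

Lemma hE_src e : msrc (hE e) = hV (msrc e).
Proof. by case: e. Qed.
Lemma hE_tgt e : mtgt (hE e) = hV (mtgt e).
Proof. case: e => [u|] //. change (Some (parent (mapI h u)) = omap (omap (mapI h)) (Some (parent u))). by rewrite mapI_parent. Qed.
Lemma hV_root : hV (mroot c) = mroot c'.
Proof. by []. Qed.
Lemma hV_leaf v : v \in mleaf c -> hV v \in mleaf c'.
Proof. by case: v => [[u|]|]; rewrite !inE. Qed.
Lemma hV_leaf_r v : hV v \in mleaf c' -> v \in mleaf c.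
Proof. by case: v => [[u|]|]; rewrite !inE. Qed.

Definition htiso : tiso (mtree c) (mtree c') :=
  @TIso (mtree c) (mtree c') hV hE hV_bij hE_bij hE_src hE_tgt hV_root hV_leaf hV_leaf_r.
End Hom.

Definition F3 : Functor (Sigma_star_iter n) (Psi n) :=
  @Functor_ (Sigma_star_iter n) (Psi n) (fun c => mkl (mlevel c Hn))
    (fun c c' h => htiso h).

Lemma F3_functor : is_functor F3.
Proof.
split => [c|a b d g f]; apply: tiso_ext => /=.
- by case=> [[[k x]|]|].
- by case=> [[k x]|].
- by case=> [[[k x]|]|].
- by case=> [[k x]|].
Qed.


Lemma bij_ext (S T : finType) (f g : bij S T) : f =1 g -> f = g.
Proof.
case: f => f1 p1; case: g => g1 p2 /= H.
have E := functional_extensionality _ _ H; subst g1.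
by rewrite (proof_irrelevance _ p1 p2).
Qed.

Lemma chain_hom_ext (c c' : chain n) (h h' : chain_hom c c') :
  (forall k x, cphi h k x = cphi h' k x) -> h = h'.
Proof.
case: h => p1 q1; case: h' => p2 q2 /= H.
have E : p1 = p2.
  by apply: functional_extensionality_dep => k; apply: bij_ext => x; apply: H.
subst p2; f_equal; apply: proof_irrelevance.
Qed.

Lemma mdist (c : chain n) v : @dist (mtree c) v = depth v.
Proof. by apply/eqP; rewrite -at_distE /= mat_dist. Qed.

Lemma depth_iso (c c' : chain n) (f : tiso (mtree c) (mtree c')) v :
  depth (iV f v) = depth v.
Proof. by rewrite -mdist dist_iso mdist. Qed.

Lemma SS_inj (c : chain n) k (x y : cS c k) :
  Some (Some (existT _ k x)) = Some (Some (existT _ k y)) :> MV c -> x = y.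
Proof. by move=> E; apply: exT_inj (Some_inj (Some_inj E)). Qed.

Lemma mtgt_S (c : chain n) (k : 'I_n) (H : k.+1 < n) (x : cS c (Ordinal H)) :
  ttgt (mtree c) (Some (existT _ (Ordinal H) x)) = Some (Some (existT _ k (cp c H x))).
Proof. exact: (congr1 Some (parent_S x)). Qed.

Lemma F3_inj (c c' : chain n) : injective (@fmap _ _ F3 c c').
Proof.
move=> h h' /= H; apply: chain_hom_ext => k x.
have := f_equal (fun f : tiso (mtree c) (mtree c') => iV f (Some (Some (existT _ k x)))) H => /=.
by move=> E; have := Some_inj (Some_inj E); rewrite /mapI /=; apply: exT_inj.
Qed.

Lemma F3_surj (c c' : chain n) (f : tiso (mtree c) (mtree c')) :
  exists h : chain_hom c c', htiso h = f.
Proof.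
have Hex k (x : cS c k) : exists y, iV f (Some (Some (existT _ k x))) = Some (Some (existT _ k y)).
  have := depth_iso f (Some (Some (existT _ k x))).
  case: (iV f _) => [[[k' y]|]|] //= [Hk].
  have Hk' : k' = k by apply: val_inj.
  by subst k'; exists y.
have Hex2 k : exists phi : cS c k -> cS c' k, forall x,
    iV f (Some (Some (existT _ k x))) = Some (Some (existT _ k (phi x))).
  exact: fin_all_exists (Hex k).
have [phi Hphi] := fin_all_exists Hex2.
have Hbij k : bijective (phi k).
  apply: inj_surj_bij => [x y Hxy|y].
    have E := Hphi k x; rewrite Hxy -Hphi in E.
    exact: SS_inj (@iV_inj _ _ f _ _ E).
  have [v Hv] := iV_surj f (Some (Some (existT _ k y))).
  have := depth_iso f v; rewrite Hv; case: v Hv => [[[k' x]|]|] //= Hv [Hk].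
  have Hk' : k' = k by apply: val_inj.
  subst k'; exists x; rewrite Hphi in Hv.
  exact: SS_inj Hv.
pose ph k := @Bij _ _ (phi k) (Hbij k).
have Hcomm (k : 'I_n) (H : k.+1 < n) (x : cS c (Ordinal H)) :
    ph k (cp c H x) = cp c' H (ph (Ordinal H) x).
  rewrite /ph /=.
  have E1 := i_tgt f (Some (existT _ (Ordinal H) x)).
  have E2 := i_src f (Some (existT _ (Ordinal H) x)).
  rewrite mtgt_S Hphi in E1; rewrite [tsrc _ _]/= Hphi in E2.
  move: E1 E2; case: (iE f _) => [u|] // E1 [Eu]; subst u.
  rewrite mtgt_S in E1; exact: esym (SS_inj E1).
exists (@ChainHom n c c' ph Hcomm); apply: tiso_ext => /=.
  case=> [[[k x]|]|] /=; first by rewrite Hphi.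
    have := depth_iso f (Some None).
    by case: (iV f _) => [[u|]|].
  by rewrite (i_root f).
move=> e; apply: msrc_inj.
have -> : msrc (iE f e) = iV f (msrc e) by apply: (i_src f).
case: e => [[k x]|] /=; first by rewrite Hphi.
have := depth_iso f (Some None).
by case: (iV f _) => [[u|]|].
Qed.

Lemma F3_ff : ffaith F3.
Proof. apply: ff_of_injsurj; [exact: F3_inj | exact: F3_surj]. Qed.

End F3.

Section Es3.
Variables (n : nat) (Hn : 0 < n) (T : tree) (Hl : is_level n T).

Definition Lev (k : 'I_n) : finType := {v : tV T | dist v == k.+2}.

Lemma par_lev (k : 'I_n) (H : k.+1 < n) (x : Lev (Ordinal H)) : dist (par (val x)) == k.+2.
Proof.
case: x => v /= /eqP Hv.
have Hr : v != troot T by rewrite -dist0 Hv.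
by move: Hv; rewrite dist_par // => -[->].
Qed.

Definition lcp (k : 'I_n) (H : k.+1 < n) (x : Lev (Ordinal H)) : Lev k :=
  exist _ (par (val x)) (par_lev x).

Definition cT : chain n := @Chain n Lev lcp.

Definition gV (v : MV cT) : tV T :=
  match v with None => troot T | Some None => w0 T | Some (Some u) => val (tagged u) end.
Definition gE (e : ME cT) : tE T :=
  match e with None => re T | Some u => out (val (tagged u)) end.

Lemma dist_gV v : dist (gV v) = depth v.
Proof.
case: v => [[[k x]|]|] /=; last exact: dist_root.
  exact: (eqP (valP x)).
by apply/eqP; rewrite dist1.
Qed.

Lemma gV_inj : injective gV.
Proof.
move=> v v' E; have := dist_gV v; rewrite E dist_gV.
case: v v' E => [[[k x]|]|] [[[k' x']|]|] //= E [Hk].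
have Hk' : k' = k by apply: val_inj.
by subst k'; congr (Some (Some (existT _ _ _))); apply: val_inj.
Qed.

Lemma gV_surj v : exists v', gV v' = v.
Proof.
case Hd: (dist v) => [|[|d]].
- by exists None; apply/esym/eqP; rewrite -dist0 Hd.
- by exists (Some None); apply/esym/eqP; rewrite -dist1 Hd.
have Hdn : d < n by have := dist_le Hl v; rewrite Hd.
have Hv : dist v == (Ordinal Hdn).+2 by rewrite Hd.
by exists (Some (Some (existT _ (Ordinal Hdn) (exist _ v Hv : Lev (Ordinal Hdn))))).
Qed.

Lemma gV_root v : (gV v == troot T) = (v == None).
Proof. by rewrite -dist0 dist_gV; case: v => [[u|]|]. Qed.

Lemma gE_src e : tsrc T (gE e) = gV (msrc e).
Proof.
case: e => [[k x]|] //=; apply: src_out.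
by rewrite -dist0 (eqP (valP x)).
Qed.

Lemma gE_inj : injective gE.
Proof.
move=> e e' E; apply: msrc_inj; apply: gV_inj.
by rewrite -!gE_src E.
Qed.

Lemma gE_surj e' : exists e, gE e = e'.
Proof.
have [v Hv] := gV_surj (tsrc T e').
case: v Hv => [v|] Hv; last by have := src_root e'; rewrite -Hv /= eqxx.
exists (if v is Some u then Some u else None); apply: out_uniq.
by rewrite gE_src -Hv; case: v {Hv}.
Qed.

Lemma gE_tgt e : ttgt T (gE e) = gV (mtgt e).
Proof.
case: e => [[[[|m] Hm] x]|] /=; last exact: tgt_re.
  apply/eqP; rewrite -dist1 -/(par _) -eqSS -dist_par.
    exact: (valP x).
  by rewrite -dist0 (eqP (valP x)).
by [].
Qed.

Lemma gV_rootE : gV None = troot T.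
Proof. by []. Qed.

Lemma gV_leaf v : v \in tleaf (mtree cT) -> gV v \in tleaf T.
Proof.
rewrite (leaf_dist Hl) dist_gV; case: v => [[u|]|] //=; rewrite inE /= //.
Qed.

Lemma gV_leaf_r v : gV v \in tleaf T -> v \in tleaf (mtree cT).
Proof.
rewrite (leaf_dist Hl) dist_gV; case: v => [[u|]|] //=; rewrite ?inE //=.
by move=> /eqP [] Hn0; move: Hn; rewrite -Hn0.
Qed.

Definition gtiso : tiso (mtree cT) T :=
  @TIso (mtree cT) T gV gE (inj_surj_bij gV_inj gV_surj) (inj_surj_bij gE_inj gE_surj)
    gE_src gE_tgt gV_rootE gV_leaf gV_leaf_r.

End Es3.

Lemma F3_es n (Hn : 0 < n) : esurj (F3 Hn).
Proof.
move=> T; exists (cT n (ltr T)).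
have [g [H1 H2]] := tiso_iso (gtiso Hn (llevel T)).
by exists (gtiso Hn (llevel T)), g.
Qed.

Lemma equiv3 n (Hn : 0 < n) : cat_equiv (Psi n) (Sigma_star_iter n).
Proof.
apply: (equiv_of_ffes (F := F3 Hn)).
- exact: Psi_cat.
- exact: F3_functor.
- exact: F3_ff.
- exact: F3_es.
Qed.

Section Cast.
Variable A : Cat.

Definition cast2 (a a' b b' : ob A) (E1 : a = a') (E2 : b = b') (f : hom a b) : hom a' b' :=
  match E1 in _ = x return hom x b' with
  | erefl => match E2 in _ = y return hom a y with erefl => f end end.

Lemma cast2K (a b : ob A) (E1 : a = a) (E2 : b = b) (f : hom a b) : cast2 E1 E2 f = f.
Proof. by rewrite (proof_irrelevance _ E1 erefl) (proof_irrelevance _ E2 erefl). Qed.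

Lemma cast2C (a a' a'' b b' b'' : ob A) (E1 : a = a') (E2 : b = b') (E1' : a' = a'')
   (E2' : b' = b'') (f : hom a b) :
  cast2 E1' E2' (cast2 E1 E2 f) = cast2 (etrans E1 E1') (etrans E2 E2') f.
Proof. by subst. Qed.

Lemma cast2_comp (a a' b b' c c' : ob A) (Ea : a = a') (Eb : b = b') (Eb2 : b = b') (Ec : c = c')
  (g : hom b c) (f : hom a b) :
  comp (cast2 Eb2 Ec g) (cast2 Ea Eb f) = cast2 Ea Ec (comp g f).
Proof.
rewrite (proof_irrelevance _ Eb2 Eb).
by subst.
Qed.

Lemma cast2_id (a a' : ob A) (E1 E2 : a = a') : cast2 E1 E2 (idm a) = idm a'.
Proof. by rewrite (proof_irrelevance _ E2 E1); subst. Qed.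

Lemma cast2_sym (a a' b b' : ob A) (E1 : a = a') (E2 : b = b') (f : hom a b) g :
  cast2 E1 E2 f = g -> f = cast2 (esym E1) (esym E2) g.
Proof. by move=> <-; subst. Qed.

End Cast.

Lemma tdec_eq (A : Cat) n (X : dtree A n) v w (E : v = w) (p : v \in tleaf (ltr (dt X)))
  (q : w \in tleaf (ltr (dt X))) : tdec X p = tdec X q.
Proof. by subst w; rewrite (bool_irrelevance p q). Qed.

Lemma ddec_eq (A : Cat) n (X : dchain A n) (k : 'I_n) (p q : k.+1 == n) (x y : cS (dc X) k) :
  x = y -> ddec X k p x = ddec X k q y.
Proof. by move=> ->; rewrite (bool_irrelevance p q). Qed.

Lemma dtree_hom_ext (A : Cat) n (X Y : dtree A n) (f g : dtree_hom X Y) :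
  tmor_iso f = tmor_iso g ->
  (forall v H (E1 : @tdec _ _ X v H = @tdec _ _ X v H)
     (E2 : tdec Y (i_leaf (tmor_iso f) H) = tdec Y (i_leaf (tmor_iso g) H)),
     cast2 E1 E2 (@tmor _ _ _ _ f v H) = @tmor _ _ _ _ g v H) -> f = g.
Proof.
case: f => i1 m1; case: g => i2 m2 /= Ei; subst i2 => H.
f_equal; apply: functional_extensionality_dep => v.
apply: functional_extensionality_dep => p.
by rewrite -(H v p erefl erefl).
Qed.

Lemma dchain_hom_ext (A : Cat) n (X Y : dchain A n) (f g : dchain_hom X Y) :
  dphi f = dphi g ->
  (forall k p x (E1 : ddec X k p x = ddec X k p x)
     (E2 : ddec Y k p (cphi (dphi f) k x) = ddec Y k p (cphi (dphi g) k x)),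
     cast2 E1 E2 (dmor f k p x) = dmor g k p x) -> f = g.
Proof.
case: f => i1 m1; case: g => i2 m2 /= Ei; subst i2 => H.
f_equal; apply: functional_extensionality_dep => k.
apply: functional_extensionality_dep => p.
apply: functional_extensionality_dep => x.
by rewrite -(H k p x erefl erefl).
Qed.

Lemma Psi_wr_cat n (A : Cat) : is_category A -> is_category (Psi_wr n A).
Proof.
case=> idl idr asc; split => a b.
- move=> f; apply: dtree_hom_ext => [|v H E1 E2]; first by apply: tiso_ext.
  by rewrite cast2K /= idl.
- move=> f; apply: dtree_hom_ext => [|v H E1 E2]; first by apply: tiso_ext.
  by rewrite cast2K /= idr.
- move=> c d f g h; apply: dtree_hom_ext => [|v H E1 E2]; first by apply: tiso_ext.
  by rewrite cast2K /= asc.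
Qed.

Section F4.
Variables (A : Cat) (n : nat) (Hn : 0 < n).

Lemma leafP (c : chain n) (k : 'I_n) (x : cS c k) :
  Some (Some (existT _ k x)) \in mleaf c -> k.+1 == n.
Proof. by rewrite inE. Qed.
Lemma nl0 (c : chain n) : None \in mleaf c -> False.
Proof. by rewrite inE. Qed.
Lemma nl1 (c : chain n) : Some None \in mleaf c -> False.
Proof. by rewrite inE. Qed.

Definition mdec (X : dchain A n) : forall v : MV (dc X), v \in mleaf (dc X) -> ob A :=
  fun v => match v as v0 return v0 \in mleaf (dc X) -> ob A with
  | Some (Some (existT k x)) => fun H => ddec X k (leafP H) x
  | Some None => fun H => False_rect _ (nl1 H)
  | None => fun H => False_rect _ (nl0 H)
  end.

Definition F4ob (X : dchain A n) : dtree A n := @DTree A n (mkl (mlevel (dc X) Hn)) (@mdec X).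

Definition F4tmor (X Y : dchain A n) (h : dchain_hom X Y) :
  forall v (H : v \in mleaf (dc X)), hom (mdec H) (mdec (hV_leaf (dphi h) H)) :=
  fun v => match v as v0 return forall H : v0 \in mleaf (dc X),
                hom (mdec H) (mdec (hV_leaf (dphi h) H)) with
  | Some (Some (existT k x)) => fun H =>
      cast2 erefl (@ddec_eq _ _ Y _ (leafP H) (leafP (hV_leaf (dphi h) H)) _ _ erefl) (dmor h k (leafP H) x)
  | Some None => fun H => False_rect _ (nl1 H)
  | None => fun H => False_rect _ (nl0 H)
  end.

Definition F4mor (X Y : dchain A n) (h : dchain_hom X Y) : dtree_hom (F4ob X) (F4ob Y) :=
  @DTreeHom A n (F4ob X) (F4ob Y) (htiso (dphi h)) (@F4tmor X Y h).

Definition F4 : Functor (Sigma_star_iter_wr n A) (Psi_wr n A) :=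
  @Functor_ (Sigma_star_iter_wr n A) (Psi_wr n A) F4ob F4mor.

Lemma dmor_irr (X Y : dchain A n) (h : dchain_hom X Y) (k : 'I_n) (p q : k.+1 == n) x :
  dmor h k p x = cast2 (@ddec_eq _ _ X k q p x x erefl) (@ddec_eq _ _ Y k q p _ _ erefl) (dmor h k q x).
Proof. by move: (@ddec_eq _ _ X k q p x x erefl) (@ddec_eq _ _ Y k q p _ _ erefl); rewrite (bool_irrelevance p q) => E1 E2; rewrite cast2K. Qed.

Lemma cast2_irr (a a' b b' : ob A) (E1 E1' : a = a') (E2 E2' : b = b') (f : hom a b) :
  cast2 E1 E2 f = cast2 E1' E2' f.
Proof. by rewrite (proof_irrelevance _ E1 E1') (proof_irrelevance _ E2 E2'). Qed.

Lemma F4_functor : is_functor F4.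
Proof.
have [F3id F3comp] := F3_functor Hn.
split => [X|X Y Z g f].
- apply: dtree_hom_ext => [|v H E1 E2]; first exact: (F3id (dc X)).
  case: v H E1 E2 => [[[k x]|]|] H E1 E2; [| by case: (nl1 H) | by case: (nl0 H)].
  cbn -[cast2]. rewrite cast2C cast2_id. done.
- apply: dtree_hom_ext => [|v H E1 E2]; first exact: (F3comp _ _ _ (dphi g) (dphi f)).
  case: v H E1 E2 => [[[k x]|]|] H E1 E2; [| by case: (nl1 H) | by case: (nl0 H)].
  cbn -[cast2].
  rewrite (dmor_irr g (leafP (hV_leaf (dphi f) H)) (leafP H)) [in RHS]cast2C cast2_comp cast2C.
  exact: cast2_irr.
Qed.

End F4.

Section F4ff.
Variables (A : Cat) (n : nat) (Hn : 0 < n).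

Lemma leafI (c : chain n) (k : 'I_n) (x : cS c k) :
  k.+1 == n -> Some (Some (existT _ k x)) \in mleaf c.
Proof. by rewrite inE. Qed.

Lemma DTreeHom_inj (X Y : dtree A n) i t t' :
  @DTreeHom A n X Y i t = @DTreeHom A n X Y i t' -> t = t'.
Proof. move=> E; injection E => E'. exact: (Eqdep.EqdepTheory.inj_pair2 _ _ _ _ _ E'). Qed.

Lemma tmor_irr (X Y : dtree A n) (f : dtree_hom X Y) v (H H' : v \in tleaf (ltr (dt X)))
  (E1 : tdec X H' = tdec X H) (E2 : tdec Y (i_leaf (tmor_iso f) H') = tdec Y (i_leaf (tmor_iso f) H)) :
  cast2 E1 E2 (tmor f H') = tmor f H.
Proof. by move: E1 E2; rewrite (bool_irrelevance H' H) => E1 E2; rewrite cast2K. Qed.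

Lemma F4_inj (X Y : dchain A n) : injective (@fmap _ _ (F4 A Hn) X Y).
Proof.
move=> h h' E.
have Ep : dphi h = dphi h'.
  apply: (@F3_inj n Hn); by have := f_equal (@tmor_iso _ _ _ _) E.
case: h h' E Ep => p m [p' m'] /= E Ep; subst p'.
move/DTreeHom_inj: E => E; f_equal.
apply: functional_extensionality_dep => k; apply: functional_extensionality_dep => q.
apply: functional_extensionality_dep => x.
have := equal_f_dep (equal_f_dep E (Some (Some (existT _ k x)))) (leafI x q); cbn -[cast2].
rewrite (bool_irrelevance (leafP (leafI x q)) q).
move=> /cast2_sym; rewrite cast2C => ->; exact: cast2K.
Qed.


Lemma F4_surj (X Y : dchain A n) (f : dtree_hom (F4ob Hn X) (F4ob Hn Y)) :
  exists h : dchain_hom X Y, F4mor Hn h = f.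
Proof.
have [ph Ef] := F3_surj (tmor_iso f).
have Ev k (x : cS (dc X) k) : iV (tmor_iso f) (Some (Some (existT _ k x)))
    = Some (Some (existT _ k (cphi ph k x))) by rewrite -Ef.
have E1 (k : 'I_n) (p : k.+1 == n) (x : cS (dc X) k) :
    tdec (F4ob Hn X) (leafI x p) = ddec X k p x.
  exact: ddec_eq.
have E2 (k : 'I_n) (p : k.+1 == n) (x : cS (dc X) k) :
    tdec (F4ob Hn Y) (i_leaf (tmor_iso f) (leafI x p)) = ddec Y k p (cphi ph k x).
  rewrite (@tdec_eq _ _ (F4ob Hn Y) _ _ (Ev k x) _ (leafI (cphi ph k x) p)).
  exact: ddec_eq.
pose dm k p x := cast2 (E1 k p x) (E2 k p x) (tmor f (leafI x p)).
exists (@DChainHom A n X Y ph dm).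
apply: dtree_hom_ext => [|v H Ea Eb]; first exact: Ef.
case: v H Ea Eb => [[[k x]|]|] H Ea Eb; [| by case: (nl1 H) | by case: (nl0 H)].
cbn -[cast2]; rewrite /dm !cast2C.
exact: (@tmor_irr _ _ f _ H (leafI x (leafP H))). 
Qed.

Lemma F4_ff : ffaith (F4 A Hn).
Proof. apply: ff_of_injsurj; [exact: F4_inj | exact: F4_surj]. Qed.

End F4ff.

Lemma cast2_idcomp (A : Cat) (catA : is_category A) (a b c : ob A) (E : a = b) (E' : b = c) :
  comp (cast2 erefl E' (idm b)) (cast2 erefl E (idm a)) = cast2 erefl (etrans E E') (idm a).
Proof. case: catA => idl _ _; subst; exact: idl. Qed.

Section Es4.
Variables (A : Cat) (catA : is_category A) (n : nat) (Hn : 0 < n) (X : dtree A n).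
Local Notation T := (ltr (dt X)).
Local Notation Hl := (llevel (dt X)).

Lemma lvleaf (k : 'I_n) (p : k.+1 == n) (x : Lev T k) : val x \in tleaf T.
Proof. by rewrite (leaf_dist Hl) (eqP (valP x)) eqSS. Qed.

Definition cX : dchain A n := @DChain A n (cT n T) (fun k p x => tdec X (lvleaf p x)).

Definition ptmor : forall v (H : v \in mleaf (cT n T)),
    hom (@mdec A n cX v H) (tdec X (gV_leaf Hl H)) :=
  fun v => match v as v0 return forall H : v0 \in mleaf (cT n T),
               hom (@mdec A n cX v0 H) (tdec X (gV_leaf Hl H)) with
  | Some (Some (existT k x)) => fun H =>
      cast2 erefl (@tdec_eq A n X _ _ erefl _ _) (idm _)
  | Some None => fun H => False_rect _ (nl1 H)
  | None => fun H => False_rect _ (nl0 H)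
  end.

Definition phi4 : dtree_hom (F4ob Hn cX) X :=
  @DTreeHom A n (F4ob Hn cX) X (gtiso Hn Hl) ptmor.

Lemma ptmor_eq v H : exists E, @ptmor v H = cast2 erefl E (idm _).
Proof.
case: v H => [[[k x]|]|] H; [| by case: (nl1 H) | by case: (nl0 H)].
by eexists.
Qed.

Lemma mdec_back v' (q : v' \in mleaf (cT n T)) w (H' : w \in tleaf T) :
  gV v' = w -> @mdec A n cX v' q = tdec X H'.
Proof.
case: v' q => [[[k x]|]|] q; [| by case: (nl1 q) | by case: (nl0 q)].
by move=> E; apply: tdec_eq.
Qed.

Lemma F4_es_one : exists (phi : @hom (Psi_wr n A) (fob (F4 A Hn) cX) X) (psi : @hom (Psi_wr n A) X (fob (F4 A Hn) cX)),
    comp psi phi = idm _ /\ comp phi psi = idm _.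
Proof.
have [g [H1 H2]] := tiso_iso (gtiso Hn Hl).
have Hgw w : gV (iV g w) = w.
  by have := f_equal (fun f => iV f w) H2.
pose tm w (H' : w \in tleaf T) : hom (tdec X H') (@mdec A n cX _ (i_leaf g H')) :=
  cast2 erefl (esym (mdec_back (i_leaf g H') H' (Hgw w))) (idm _).
exists phi4, (@DTreeHom A n X (F4ob Hn cX) g tm); split.
- apply: dtree_hom_ext => [|v H Ea Eb]; first exact: H1.
  have [E HE] := ptmor_eq H. cbn -[cast2 ptmor]. rewrite HE.
  rewrite /tm cast2_idcomp // cast2C; exact: cast2_id.
- apply: dtree_hom_ext => [|w H Ea Eb]; first exact: H2.
  rewrite /= /tm; have [E ->] := ptmor_eq (i_leaf g H).
  rewrite cast2_idcomp // cast2C; exact: cast2_id.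
Qed.

End Es4.

Lemma F4_es (A : Cat) (catA : is_category A) n (Hn : 0 < n) : esurj (F4 A Hn).
Proof. by move=> X; exists (cX X); apply: F4_es_one. Qed.

Lemma equiv4 (A : Cat) (catA : is_category A) n (Hn : 0 < n) :
  cat_equiv (Psi_wr n A) (Sigma_star_iter_wr n A).
Proof.
apply: (equiv_of_ffes (F := F4 A Hn)).
- exact: Psi_wr_cat.
- exact: F4_functor.
- exact: F4_ff.
- exact: F4_es.
Qed.

Section Comp.
Variables (A B C : Cat) (F : Functor B C) (E : Functor A B).

Definition fcomp : Functor A C :=
  @Functor_ A C (fun a => fob F (fob E a)) (fun a b f => fmap F (fmap E f)).

Lemma fcomp_functor : is_functor F -> is_functor E -> is_functor fcomp.
Proof.
case=> F1 F2 [E1 E2]; split => [a|a b c g f] /=; first by rewrite E1 F1.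
by rewrite E2 F2.
Qed.

Lemma fcomp_ff : ffaith F -> ffaith E -> ffaith fcomp.
Proof.
move=> HF HE a b; have [g [g1 g2]] := HF (fob E a) (fob E b).
have [h [h1 h2]] := HE a b.
by exists (fun x => h (g x)); split => x /=; rewrite ?g1 ?h1 ?h2 ?g2.
Qed.

Lemma fcomp_es : is_category C -> is_functor F -> esurj F -> esurj E -> esurj fcomp.
Proof.
case=> idl idr asc [F1 F2] HF HE c.
have [b [phi [psi [H1 H2]]]] := HF c.
have [a [phi' [psi' [H1' H2']]]] := HE b.
exists a, (comp phi (fmap F phi')), (comp (fmap F psi') psi) => /=; split.
  rewrite -asc (asc _ _ _ _ _ phi psi) H1 idl -F2 H1' F1 //.
rewrite -asc (asc _ _ _ _ _ (fmap F psi') (fmap F phi')) -F2 H2' F1 idl H2 //.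
Qed.
End Comp.

Definition E1ob (S : finType) : chain 1 := @Chain 1 (fun _ => S) (fun k H x => x).
Definition E1mor (S T : finType) (f : bij S T) : chain_hom (E1ob S) (E1ob T) :=
  @ChainHom 1 (E1ob S) (E1ob T) (fun _ => f) (fun k H x => erefl).
Definition E1 : Functor Sigma_star (Sigma_star_iter 1) :=
  @Functor_ Sigma_star (Sigma_star_iter 1) E1ob E1mor.

Lemma E1_functor : is_functor E1.
Proof. by split => *; apply: chain_hom_ext. Qed.

Lemma E1_ff : ffaith E1.
Proof.
apply: ff_of_injsurj => [S T f f' Hf|S T h].
  apply: bij_ext => x; exact: (f_equal (fun h : chain_hom (E1ob S) (E1ob T) => cphi h ord0 x) Hf).
exists (cphi h ord0); apply: chain_hom_ext => k x /=.
by rewrite (ord1 k).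
Qed.

Definition castI (d : chain 1) (k : 'I_1) (e : ord0 = k) : bij (cS d ord0) (cS d k) :=
  match e in _ = k' return bij (cS d ord0) (cS d k') with erefl => bij_idm _ end.
Definition castI' (d : chain 1) (k : 'I_1) (e : ord0 = k) : bij (cS d k) (cS d ord0) :=
  match e in _ = k' return bij (cS d k') (cS d ord0) with erefl => bij_idm _ end.
Lemma castIK d k (e : ord0 = k) x : castI' d e (castI d e x) = x.
Proof. by move: x; case: k / e. Qed.
Lemma castIK' d k (e : ord0 = k) x : castI d e (castI' d e x) = x.
Proof. by move: x; case: k / e. Qed.

Lemma lt1F (k : 'I_1) : k.+1 < 1 -> False.
Proof. by []. Qed.

Definition c1phi (d : chain 1) : chain_hom (E1ob (cS d ord0)) d :=
  @ChainHom 1 (E1ob (cS d ord0)) d (fun k => castI d (esym (ord1 k)))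
    (fun k H x => False_ind _ (lt1F H)).
Definition c1psi (d : chain 1) : chain_hom d (E1ob (cS d ord0)) :=
  @ChainHom 1 d (E1ob (cS d ord0)) (fun k => castI' d (esym (ord1 k)))
    (fun k H x => False_ind _ (lt1F H)).

Lemma E1_es : esurj E1.
Proof.
move=> d; exists (cS d ord0), (c1phi d), (c1psi d); split.
  by apply: chain_hom_ext => k x /=; rewrite castIK.
by apply: chain_hom_ext => k x /=; rewrite castIK'.
Qed.

Lemma equiv1 : cat_equiv (Psi 1) Sigma_star.
Proof.
apply: (equiv_of_ffes (F := fcomp (F3 (ltn0Sn 0)) E1)).
- exact: Psi_cat.
- apply: fcomp_functor; [exact: F3_functor | exact: E1_functor].
- apply: fcomp_ff; [exact: F3_ff | exact: E1_ff].
- apply: fcomp_es; [exact: Psi_cat | exact: F3_functor | exact: F3_es | exact: E1_es].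
Qed.

Section E1w.
Variables (A : Cat) (catA : is_category A).

Definition E1wob (X : fam A) : dchain A 1 :=
  @DChain A 1 (E1ob (fS X)) (fun k p x => fA X x).
Definition E1wmor (X Y : fam A) (f : fam_hom X Y) : dchain_hom (E1wob X) (E1wob Y) :=
  @DChainHom A 1 (E1wob X) (E1wob Y) (E1mor (fsig f)) (fun k p x => fmor f x).
Definition E1w : Functor (Sigma_star_wr A) (Sigma_star_iter_wr 1 A) :=
  @Functor_ (Sigma_star_wr A) (Sigma_star_iter_wr 1 A) E1wob E1wmor.

Lemma E1w_functor : is_functor E1w.
Proof.
split => *; (apply: dchain_hom_ext => [|k p x E1 E2]; [by apply: chain_hom_ext | by rewrite cast2K]).
Qed.

Lemma fam_hom_ext (X Y : fam A) (f g : fam_hom X Y) :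
  fsig f = fsig g -> (forall t (E : fA Y (fsig f t) = fA Y (fsig g t)), cast2 erefl E (fmor f t) = fmor g t) ->
  f = g.
Proof.
case: f => s1 m1; case: g => s2 m2 /= Es; subst s2 => H; f_equal.
by apply: functional_extensionality_dep => t; rewrite -(H t erefl).
Qed.

Lemma DChainHom_inj n (X Y : dchain A n) i t t' :
  @DChainHom A n X Y i t = @DChainHom A n X Y i t' -> t = t'.
Proof. move=> E; injection E => E'. exact: (Eqdep.EqdepTheory.inj_pair2 _ _ _ _ _ E'). Qed.

Lemma E1w_ff : ffaith E1w.
Proof.
apply: ff_of_injsurj => [X Y f f' Hf|X Y h].
  have Hs : fsig f = fsig f'.
    apply: bij_ext => x.
    exact: (f_equal (fun h : dchain_hom (E1wob X) (E1wob Y) => cphi (dphi h) ord0 x) Hf).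
  apply: fam_hom_ext => // t E; case: f f' Hf Hs E => s m [s' m'] /= Hf Hs E; subst s'.
  have := equal_f_dep (equal_f_dep (equal_f_dep (DChainHom_inj Hf) ord0) isT) t.
  by move=> /= <-; rewrite (proof_irrelevance _ E erefl).
exists (@FamHom A X Y (cphi (dphi h) ord0) (fun t => dmor h ord0 isT t)).
apply: dchain_hom_ext => [|k p x E1 E2].
  apply: chain_hom_ext => k x /=; by rewrite (ord1 k).
move: p x E1 E2; rewrite (ord1 k) => p x E1 E2.
rewrite (bool_irrelevance p isT) /=; move: E1 E2; rewrite (bool_irrelevance p isT) => E1 E2.
by rewrite cast2K.
Qed.


Lemma ddec_castI (d : dchain A 1) (k : 'I_1) (e : ord0 = k) (p : k.+1 == 1) x :
  ddec d ord0 isT x = ddec d k p (castI (dc d) e x).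
Proof. by move: p; case: k / e => p; apply: ddec_eq. Qed.

Lemma ddec_castI' (d : dchain A 1) (k : 'I_1) (e : ord0 = k) (p : k.+1 == 1) x :
  ddec d k p x = ddec d ord0 isT (castI' (dc d) e x).
Proof. by move: p x; case: k / e => p x; apply: ddec_eq. Qed.

Definition famd (d : dchain A 1) : fam A := @Fam A (cS (dc d) ord0) (fun x => ddec d ord0 isT x).

Definition d1phi (d : dchain A 1) : dchain_hom (E1wob (famd d)) d :=
  @DChainHom A 1 (E1wob (famd d)) d (c1phi (dc d))
    (fun k p x => cast2 erefl (@ddec_castI d k (esym (ord1 k)) p x) (idm _)).
Definition d1psi (d : dchain A 1) : dchain_hom d (E1wob (famd d)) :=
  @DChainHom A 1 d (E1wob (famd d)) (c1psi (dc d))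
    (fun k p x => cast2 erefl (@ddec_castI' d k (esym (ord1 k)) p x) (idm _)).

Lemma E1w_es : esurj E1w.
Proof.
move=> d; exists (famd d), (d1phi d), (d1psi d); split.
  apply: dchain_hom_ext => [|k p x E1 E2].
    by apply: chain_hom_ext => k x /=; rewrite castIK.
  by rewrite /= cast2_idcomp // cast2C cast2_id.
apply: dchain_hom_ext => [|k p x E1 E2].
  by apply: chain_hom_ext => k x /=; rewrite castIK'.
by rewrite /= cast2_idcomp // cast2C cast2_id.
Qed.

End E1w.

Lemma equiv2 (A : Cat) (catA : is_category A) : cat_equiv (Psi_wr 1 A) (Sigma_star_wr A).
Proof.
apply: (equiv_of_ffes (F := fcomp (F4 A (ltn0Sn 0)) (E1w A))).
- exact: Psi_wr_cat.
- apply: fcomp_functor; [exact: F4_functor | exact: E1w_functor].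
- apply: fcomp_ff; [exact: F4_ff | exact: E1w_ff].
- apply: fcomp_es; [exact: Psi_wr_cat | exact: F4_functor | exact: F4_es | exact: E1w_es].
Qed.

Theorem proposition2p13 :
  forall (A : Cat), is_category A ->
  forall n : nat, 1 <= n ->
    [/\ cat_equiv (Psi 1) Sigma_star,
        cat_equiv (Psi_wr 1 A) (Sigma_star_wr A),
        cat_equiv (Psi n) (Sigma_star_iter n) &
        cat_equiv (Psi_wr n A) (Sigma_star_iter_wr n A)].
Proof.
move=> A catA n Hn; split.
- exact: equiv1.
- exact: equiv2.
- exact: equiv3.
- exact: equiv4.
Qed.
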